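(* Fix $T>0$ and $v_f=\psi_m$ for some $m\in\{0,\dots,2J\}$. Consider the linear ODE $$\frac{d}{dt}v_t=(-iF_y-F_z^2+CF_z)v_t,\qquad v_0\in\mathbb{C}^N\setminus\{0\}.$$ For all sufficiently large real constants $C$, for every $v_0\ne0$ there exists $t\in[0,T]$ such that $v_t^*v_f\ne0$.
   Context: $2J\in\mathbb{N}$, $J>0$, $N=2J+1$; $\{\psi_k\}_{k=0}^{2J}$ standard basis of $\mathbb{C}^N$; $F_y\psi_k=ic_{k-J}\psi_{k+1}-ic_{J-k}\psi_{k-1}$, $F_z\psi_k=(k-J)\psi_k$, $c_m=\tfrac12\sqrt{(J-m)(J+m+1)}$. *)

(* Defs.v *)
From HB Require Import structures.
From mathcomp Require Import all_boot all_order all_algebra.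
From mathcomp Require Import all_classical all_reals all_analysis.
From mathcomp Require Import complex.
Set Implicit Arguments. Unset Strict Implicit. Unset Printing Implicit Defensive.
Import Order.TTheory GRing.Theory Num.Theory.
Local Open Scope ring_scope.

(* Spin J with 2J = n (n : nat, n > 0 imposed in the theorem); dimension N = n+1 = 2J+1.
   Basis vectors psi_k, k = 0..2J, are indexed by 'I_(n.+1). *)
Section Spin.
Variables (R : realType) (n : nat).

Definition spinJ : R := n%:R / 2.

Definition cc (m : R) : R := 2^-1 * Num.sqrt ((spinJ - m) * (spinJ + m + 1)).

Definition psi (k : 'I_n.+1) : 'cV[R[i]]_n.+1 := delta_mx k 0.

(* F_y psi_k = i c_{k-J} psi_{k+1} - i c_{J-k} psi_{k-1}, i.e. column k of F_y *)
Definition Fy : 'M[R[i]]_n.+1 :=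
  \matrix_(a, k)
    (if a == k.+1 :> nat then 'i%C * (cc (k%:R - spinJ))%:C%C
     else if a.+1 == k :> nat then - ('i%C * (cc (spinJ - k%:R))%:C%C)
     else 0).

Definition Fz : 'M[R[i]]_n.+1 :=
  \matrix_(a, k) (if a == k then (k%:R - spinJ)%:C%C else 0).

Definition gen (C : R) : 'M[R[i]]_n.+1 :=
  - ('i%C *: Fy) - Fz *m Fz + (C%:C%C) *: Fz.

Definition solves (C : R) (v : R -> 'cV[R[i]]_n.+1) : Prop :=
  forall (k : 'I_n.+1) (t : R),
    is_derive t 1 (fun s => @complex.Re R (v s k 0)) (@complex.Re R ((gen C *m v t) k 0)) /\
    is_derive t 1 (fun s => @complex.Im R (v s k 0)) (@complex.Im R ((gen C *m v t) k 0)).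

Definition adj (p q : nat) (A : 'M[R[i]]_(p, q)) : 'M[R[i]]_(q, p) :=
  (map_mx (@conjc R) A)^T.

End Spin.

(* Main.v *)
Require Import Defs.
From HB Require Import structures.
From mathcomp Require Import all_boot all_order all_algebra.
From mathcomp Require Import all_classical all_reals all_analysis.
From mathcomp Require Import complex.
From mathcomp Require Import ring lra zify.
Import Order.TTheory GRing.Theory Num.Theory numFieldNormedType.Exports.
Local Open Scope classical_set_scope.
Local Open Scope ring_scope.

Section Eig.
Variables (F : closedFieldType) (N : nat) (A : 'M[F]_N.+1) (m : 'I_N.+1).

Definition Pinv (w : 'cV[F]_N.+1) := forall k, (A ^+ k *m w) m 0 = 0.

Lemma Pinv_step z w : Pinv w -> Pinv ((A - z%:M) *m w).
Proof.
move=> Pw k; rewrite mulmxA mulmxBr mul_mx_scalar mulmxBl -scalemxAl.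
have -> : A ^+ k *m A = A ^+ k.+1 by rewrite exprSr mulmxE.
by rewrite mxE Pw add0r mxE mxE Pw mulr0 oppr0.
Qed.

Lemma Pinv_prod (s : seq F) w : Pinv w -> Pinv ((\prod_(z <- s) (A - z%:M)) *m w).
Proof.
elim: s w => [|z s IH] w Pw; first by rewrite big_nil mul1mx.
rewrite big_cons -mulmxE -mulmxA; apply: Pinv_step; exact: IH.
Qed.

Lemma eig_list (s : seq F) w : Pinv w -> w != 0 -> (\prod_(z <- s) (A - z%:M)) *m w = 0 ->
  exists (lam : F) (x : 'cV[F]_N.+1), [/\ x != 0, A *m x = lam *: x & x m 0 = 0].
Proof.
elim: s w => [|z s IH] w Pw w0; first by rewrite big_nil mul1mx => /eqP; rewrite (negbTE w0).
rewrite big_cons -mulmxE -mulmxA.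
have [u0|u0] := eqVneq ((\prod_(z <- s) (A - z%:M)) *m w) 0.
  by move=> _; exact: (IH w Pw w0 u0).
move=> h; exists z, ((\prod_(z <- s) (A - z%:M)) *m w); split => //.
  by apply/eqP; rewrite -subr_eq0 -mul_scalar_mx -mulmxBl h.
by have := @Pinv_prod s w Pw 0; rewrite expr0 mul1mx -mulmxE.
Qed.

Lemma eig_exists w : w != 0 -> Pinv w ->
  exists (lam : F) (x : 'cV[F]_N.+1), [/\ x != 0, A *m x = lam *: x & x m 0 = 0].
Proof.
move=> w0 Pw; have [r Dp] := closed_field_poly_normal (char_poly A).
move: (Cayley_Hamilton A); rewrite Dp (monicP (char_poly_monic A)) scale1r rmorph_prod.
have -> : \prod_(i <- r) horner_mx A ('X - i%:P) = \prod_(z <- r) (A - z%:M).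
  by apply: eq_bigr => z _; rewrite rmorphB /= horner_mx_X horner_mx_C.
move=> h; apply: (@eig_list r w Pw w0); by rewrite h mul0mx.
Qed.
End Eig.

Section C.
Variable R : realType.
Lemma ReD (x y : R[i]) : complex.Re (x + y) = complex.Re x + complex.Re y.
Proof. by case: x; case: y. Qed.
Lemma ImD (x y : R[i]) : complex.Im (x + y) = complex.Im x + complex.Im y.
Proof. by case: x; case: y. Qed.
Lemma Re0 : complex.Re (0 : R[i]) = 0. Proof. by []. Qed.
Lemma Im0 : complex.Im (0 : R[i]) = 0. Proof. by []. Qed.
Lemma ReM (x y : R[i]) : complex.Re (x * y) = complex.Re x * complex.Re y - complex.Im x * complex.Im y.
Proof. by case: x; case: y. Qed.
Lemma ImM (x y : R[i]) : complex.Im (x * y) = complex.Re x * complex.Im y + complex.Im x * complex.Re y.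
Proof. by case: x => a b; case: y => c d /=; rewrite addrC. Qed.
End C.

Lemma deriv_right0 (R : realType) (f : R -> R) (t e d : R) : 0 < e ->
  (forall s, t <= s -> s < t + e -> f s = 0) -> is_derive t 1 f d -> d = 0.
Proof.
move=> e0 fz /is_derive1_caratheodory [g [gE gc gt]].
have g0 : \forall z \near t^'+, g z = 0.
  near=> z.
  have tz : t < z by near: z; exact: nbhs_right_gt.
  have ze : z < t + e by near: z; apply: nbhs_right_lt; rewrite ltrDl.
  have := gE z; rewrite !fz ?lexx ?ltrDl // ?(ltW tz) // subr0 => /esym/eqP.
  by rewrite mulf_eq0 subr_eq0 (gt_eqF tz) orbF => /eqP.
have h1 : (g z @[z --> t^'+]) --> d by rewrite -gt; exact: cvg_at_right_filter.
have h2 : (g z @[z --> t^'+]) --> 0 by exact: cvg_near_cst.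
exact: (cvg_unique (@Rhausdorff R) h1 h2).
Unshelve. all: by end_near.
Qed.

Section An.
Variables (R : realType) (n : nat) (C : R) (v : R -> 'cV[R[i]]_n.+1).
Hypothesis hv : solves C v.

Lemma lin_deriv (a : 'I_n.+1 -> R[i]) (t : R) :
  is_derive t 1 (fun s => complex.Re (\sum_j a j * v s j 0))
     (complex.Re (\sum_j a j * (gen n C *m v t) j 0)) /\
  is_derive t 1 (fun s => complex.Im (\sum_j a j * v s j 0))
     (complex.Im (\sum_j a j * (gen n C *m v t) j 0)).
Proof.
split.
- have -> : (fun s => complex.Re (\sum_j a j * v s j 0)) =
     \sum_j ((complex.Re (a j) \*: (fun s => complex.Re (v s j 0))) -
             (complex.Im (a j) \*: (fun s => complex.Im (v s j 0)))).
    apply/funext => s; rewrite fct_sumE (big_morph _ (@ReD R) (@Re0 R)).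
    by apply: eq_bigr => j _; rewrite ReM.
  rewrite (big_morph _ (@ReD R) (@Re0 R)).
  under eq_bigr do rewrite ReM.
  apply: is_derive_sum => j; apply: is_deriveB; apply: is_deriveZ; apply hv.
- have -> : (fun s => complex.Im (\sum_j a j * v s j 0)) =
     \sum_j ((complex.Re (a j) \*: (fun s => complex.Im (v s j 0))) +
             (complex.Im (a j) \*: (fun s => complex.Re (v s j 0)))).
    apply/funext => s; rewrite fct_sumE (big_morph _ (@ImD R) (@Im0 R)).
    by apply: eq_bigr => j _; rewrite ImM.
  rewrite (big_morph _ (@ImD R) (@Im0 R)).
  under eq_bigr do rewrite ImM.
  apply: is_derive_sum => j; apply: is_deriveD; apply: is_deriveZ; apply hv.
Qed.

Lemma krylov_zero (T : R) (m : 'I_n.+1) : 0 < T ->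
  (forall t, 0 <= t <= T -> v t m 0 = 0) ->
  forall k t, 0 <= t < T -> (gen n C ^+ k *m v t) m 0 = 0.
Proof.
move=> T0 hz; elim=> [|k IH] t /andP[t0 tT].
  by rewrite expr0 mul1mx hz // t0 ltW.
have E : forall s, (gen n C ^+ k *m v s) m 0 = \sum_j (gen n C ^+ k) m j * v s j 0.
  by move=> s; rewrite mxE.
have E1 : (gen n C ^+ k.+1 *m v t) m 0 = \sum_j (gen n C ^+ k) m j * (gen n C *m v t) j 0.
  by rewrite exprSr -mulmxE -mulmxA mxE.
have [dRe dIm] := lin_deriv (fun j => (gen n C ^+ k) m j) t.
have zs : forall s, t <= s -> s < t + (T - t) -> \sum_j (gen n C ^+ k) m j * v s j 0 = 0.
  move=> s ts; rewrite addrC subrK => sT; rewrite -E; apply: IH.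
  by rewrite sT andbT (le_trans t0 ts).
have et : 0 < T - t by rewrite subr_gt0.
have r0 := @deriv_right0 R _ _ _ _ et (fun s ts sT => congr1 (@complex.Re R) (zs s ts sT)) dRe.
have i0 := @deriv_right0 R _ _ _ _ et (fun s ts sT => congr1 (@complex.Im R) (zs s ts sT)) dIm.
rewrite E1; move: r0 i0; case: (\sum_j _) => a b /= -> -> //.
Qed.
End An.

Section G.
Variables (R : realType) (n : nat) (C : R).
Let Fy := Fy R n.
Definition dl (i : 'I_n.+1) : R := i%:R - spinJ R n.
Definition dd (i : 'I_n.+1) : R := - (dl i) ^+ 2 + C * dl i.

Lemma FyD i : Fy i i = 0.
Proof. by rewrite /Fy /Defs.Fy mxE eqn_leq ltnn /= andbF eqn_leq ltnn. Qed.

Lemma genE i j : gen n C i j = (if i == j then (dd i)%:C%C else 0) - 'i%C * Fy i j.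
Proof.
rewrite /gen !mxE (bigD1 i) //= big1 => [|k /negbTE ki]; last first.
  by rewrite !mxE eq_sym ki mul0r.
rewrite !mxE eqxx addr0.
have [<-|ij] := eqVneq i j; set X := _ * (if _ then _ else _).
  rewrite /dd /dl; ring.
by rewrite mulr0 mulr0 subr0 addr0 add0r.
Qed.

Lemma rowE (x : 'cV[R[i]]_n.+1) i :
  (gen n C *m x) i 0 = (dd i)%:C%C * x i 0 - 'i%C * (Fy *m x) i 0.
Proof.
rewrite !mxE; under eq_bigr do rewrite genE mulrBl.
rewrite sumrB (bigD1 i) //= big1 => [|k /negbTE ki]; last by rewrite eq_sym ki mul0r.
by rewrite eqxx addr0 mulr_sumr; congr (_ - _); apply: eq_bigr => k _; rewrite mulrA.
Qed.

Lemma normi : `|'i%C : R[i]| = 1.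
Proof.
have h : `|'i%C : R[i]| ^+ 2 = 1 by rewrite -normrX sqr_i normrN1.
have g : 0 <= `|'i%C : R[i]| by [].
move: h g; set a := `|_|; move=> /eqP; rewrite sqrf_eq1 => /orP[/eqP//|/eqP ->].
by rewrite oppr_ge0 ler10.
Qed.

Definition K : R[i] := \sum_a \sum_k `|Fy a k|.

Lemma gersh (x : 'cV[R[i]]_n.+1) lam i : gen n C *m x = lam *: x -> x i 0 != 0 ->
  (forall k, Fy i k != 0 -> `|x k 0| <= `|x i 0|) -> `|(dd i)%:C%C - lam| <= K.
Proof.
move=> ev xi hk.
have h : ((dd i)%:C%C - lam) * x i 0 = 'i%C * (Fy *m x) i 0.
  have := congr1 (fun M : 'M[R[i]]_(n.+1,1) => M i 0) ev; rewrite /= rowE [X in _ = X]mxE => e.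
  by rewrite mulrBl -e; ring.
have xi0 : 0 < `|x i 0| by rewrite normr_gt0.
rewrite -(ler_pM2r xi0) -normrM h normrM normi mul1r mxE.
apply: le_trans (ler_norm_sum _ _ _) _.
apply: (@le_trans _ _ (\sum_k `|Fy i k| * `|x i 0|)).
  apply: ler_sum => k _; rewrite normrM.
  have [->|nz] := eqVneq (Fy i k) 0; first by rewrite normr0 !mul0r.
  by apply: ler_wpM2l => //; apply: hk.
rewrite -mulr_suml ler_pM2r // /K [X in _ <= X](bigD1 i) //= lerDl.
by apply: sumr_ge0 => a _; apply: sumr_ge0.
Qed.

Lemma JJ : spinJ R n + spinJ R n = n%:R.
Proof. by rewrite /spinJ -splitr. Qed.

Lemma cc_neq0 (x : R) : 0 < (spinJ R n - x) * (spinJ R n + x + 1) -> cc n x != 0.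
Proof.
move=> h; rewrite /cc mulf_neq0 ?invr_eq0 ?pnatr_eq0 //.
by rewrite gt_eqF // sqrtr_gt0.
Qed.

Lemma Fy0 (a k : 'I_n.+1) : a != k.+1 :> nat -> a.+1 != k :> nat -> Fy a k = 0.
Proof. by move=> /negbTE h1 /negbTE h2; rewrite /Fy mxE h1 h2. Qed.

Lemma i_neq0 : ('i%C : R[i]) != 0.
Proof. by rewrite -normr_eq0 normi oner_eq0. Qed.

Lemma Fy_sub (a k : 'I_n.+1) : a = k.+1 :> nat -> Fy a k != 0.
Proof.
move=> ak; rewrite /Fy mxE ak eqxx mulf_neq0 ?i_neq0 //.
rewrite (inj_eq (@complexI R)) cc_neq0 //.
have hJ := JJ; have kn : (k.+1 <= n)%N by rewrite -ak -ltnS.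
have : (k.+1)%:R <= n%:R :> R by rewrite ler_nat.
rewrite -natr1 => kn'; have k0 : 0 <= k%:R :> R by [].
nra.
Qed.

Lemma Fy_sup (a k : 'I_n.+1) : a.+1 = k :> nat -> Fy a k != 0.
Proof.
move=> ak; rewrite /Fy mxE.
have -> : (a == k.+1 :> nat) = false by apply/negbTE/eqP; lia.
have -> : (a.+1 == k :> nat) = true by apply/eqP.
rewrite oppr_eq0 mulf_neq0 ?i_neq0 //.
rewrite (inj_eq (@complexI R)) cc_neq0 //.
have hJ := JJ; have kn : (k <= n)%N by rewrite -ltnS.
have : k%:R <= n%:R :> R by rewrite ler_nat.
have : 1 <= k%:R :> R by rewrite ler1n -ak.
move=> k1 kn'; nra.
Qed.

Section Propag.
Variables (x : 'cV[R[i]]_n.+1) (lam : R[i]).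
Hypothesis ev : gen n C *m x = lam *: x.

Lemma rowFy (i : 'I_n.+1) : x i 0 = 0 -> (Fy *m x) i 0 = 0.
Proof.
move=> xi; have := congr1 (fun M : 'M[R[i]]_(n.+1,1) => M i 0) ev.
rewrite /= rowE [X in _ = X]mxE xi !mulr0 sub0r => /eqP.
by rewrite oppr_eq0 mulf_eq0 (negbTE i_neq0) => /eqP.
Qed.

Lemma prop_down (i : nat) : (0 < i)%N -> (i <= n)%N ->
  (forall j : 'I_n.+1, (i <= j)%N -> x j 0 = 0) ->
  forall j : 'I_n.+1, (i.-1 <= j)%N -> x j 0 = 0.
Proof.
move=> i0 iN hz.
have iN' : (i < n.+1)%N by []. have pN : (i.-1 < n.+1)%N by rewrite (leq_ltn_trans (leq_pred i)).
pose ii := Ordinal iN'; pose p := Ordinal pN.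
have hp : x p 0 = 0.
  have := rowFy ii (hz ii (leqnn i)); rewrite mxE (bigD1 p) //= big1 ?addr0.
    move=> /eqP; rewrite mulf_eq0 (negbTE (@Fy_sub ii p (esym (prednK i0)))) /= => /eqP //.
  move=> k kp; have [ik|ki] := leqP i k; first by rewrite hz ?mulr0.
  rewrite Fy0 ?mul0r //=.
    apply/negP => /eqP e; move/eqP: kp; apply; apply: val_inj => /=; rewrite e //.
  by apply/eqP; lia.
move=> j; rewrite leq_eqVlt => /orP[/eqP e|]; first by rewrite (_ : j = p) //; exact: val_inj.
by rewrite prednK // => /hz.
Qed.

Lemma prop_up (i : nat) : (i < n)%N ->
  (forall j : 'I_n.+1, (j <= i)%N -> x j 0 = 0) ->
  forall j : 'I_n.+1, (j <= i.+1)%N -> x j 0 = 0.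
Proof.
move=> iN hz.
have iN' : (i < n.+1)%N by rewrite ltnW. have pN : (i.+1 < n.+1)%N by [].
pose ii := Ordinal iN'; pose p := Ordinal pN.
have hp : x p 0 = 0.
  have := rowFy ii (hz ii (leqnn i)); rewrite mxE (bigD1 p) //= big1 ?addr0.
    move=> /eqP; rewrite mulf_eq0 (negbTE (@Fy_sup ii p erefl)) /= => /eqP //.
  move=> k kp; have [ki|ik] := leqP k i; first by rewrite hz ?mulr0.
  rewrite Fy0 ?mul0r //=.
    by apply/eqP; lia.
  apply/negP => /eqP e; move/eqP: kp; apply; apply: val_inj => /=; rewrite e //.
move=> j; rewrite leq_eqVlt => /orP[/eqP e|]; first by rewrite (_ : j = p) //; exact: val_inj.
by rewrite ltnS => /hz.
Qed.

Lemma zero_down (m : nat) : (m <= n)%N -> (forall j : 'I_n.+1, (m <= j)%N -> x j 0 = 0) -> x = 0.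
Proof.
move=> mn hz.
have H : forall d, forall j : 'I_n.+1, (m - d <= j)%N -> x j 0 = 0.
  elim=> [|d IH]; first by rewrite subn0.
  have [e|ne] := eqVneq (m - d)%N 0%N.
    by move=> j _; apply: IH; rewrite e.
  move=> j hj; apply: (prop_down (m - d)%N _ _ IH j).
  - by rewrite lt0n.
  - by rewrite (leq_trans (leq_subr _ _)).
  - by rewrite -subnS.
apply/matrixP => j k; rewrite ord1 mxE; apply: (H m); by rewrite subnn.
Qed.

Lemma zero_up (m : nat) : (forall j : 'I_n.+1, (j <= m)%N -> x j 0 = 0) -> x = 0.
Proof.
move=> hz.
have H : forall d, forall j : 'I_n.+1, (j <= m + d)%N -> x j 0 = 0.
  elim=> [|d IH]; first by rewrite addn0.
  have [le|lt] := leqP n (m + d)%N.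
    by move=> j _; apply: IH; rewrite (leq_trans _ le) // -ltnS.
  move=> j hj; have := @prop_up _ lt IH j; rewrite -addnS; exact.
apply/matrixP => j k; rewrite ord1 mxE; apply: (H n); by rewrite (leq_trans _ (leq_addl _ _)) // -ltnS.
Qed.
End Propag.
End G.

Section Main.
Variables (R : realType) (n : nat).

Lemma ge0_real (z : R[i]) : 0 <= z -> z = (complex.Re z)%:C%C.
Proof. by move=> /ger0_Im; case: z => a b /= ->. Qed.

Lemma norm_real (r : R) : `|r%:C%C| = `|r|%:C%C.
Proof.
have [r0|r0] := leP 0 r.
  by rewrite !ger0_norm // ler0c.
rewrite !ltr0_norm ?rmorphN //.
by rewrite ltcE /= eqxx.
Qed.

Lemma le_norm_re (a b : R[i]) : complex.Re `|a| <= complex.Re `|b| -> `|a| <= `|b|.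
Proof.
move=> h; rewrite [X in X <= _](ge0_real _ (normr_ge0 a)) [X in _ <= X](ge0_real _ (normr_ge0 b)).
by rewrite lecR.
Qed.

Definition Kr := complex.Re (K R n).
Lemma K_ge0 : 0 <= K R n.
Proof. by apply: sumr_ge0 => a _; apply: sumr_ge0. Qed.
Lemma KE : K R n = Kr%:C%C.
Proof. exact: ge0_real _ K_ge0. Qed.
Lemma Kr_ge0 : 0 <= Kr.
Proof. by have := K_ge0; rewrite KE ler0c. Qed.

Definition C0 : R := n%:R + 2 * Kr + 1.

Lemma exists_max (N : nat) (P : pred 'I_N) (f : 'I_N -> R) i0 : P i0 ->
  exists2 i, P i & forall k, P k -> f k <= f i.
Proof. by move=> Pi0; case: (arg_maxP f Pi0) => i Pi h; exists i. Qed.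

Lemma no_eig (C : R) (hC : C0 <= C) (m : 'I_n.+1) (x : 'cV[R[i]]_n.+1) (lam : R[i]) :
  gen n C *m x = lam *: x -> x m 0 = 0 -> x = 0.
Proof.
move=> ev xm.
have [top|] := boolP [exists k : 'I_n.+1, (k < m)%N && (x k 0 != 0)]; last first.
  move/existsPn => h; apply: (@zero_up R n C x lam ev m) => j jm.
  have [jm'|/eqP jm'] := boolP (j < m)%N.
    by move: (h j); rewrite jm' /= negbK => /eqP.
  rewrite (_ : j = m) //; apply: val_inj => /=; move: jm jm'; lia.
have [bot|] := boolP [exists k : 'I_n.+1, (m < k)%N && (x k 0 != 0)]; last first.
  move/existsPn => h; apply: (@zero_down R n C x lam ev m); first by rewrite -ltnS.
  move=> j jm.
  have [jm'|/eqP jm'] := boolP (m < j)%N.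
    by move: (h j); rewrite jm' /= negbK => /eqP.
  rewrite (_ : j = m) //; apply: val_inj => /=; move: jm jm'; lia.
exfalso.
case/existsP: top => i0 Pi0.
case: (@exists_max _ [pred k : 'I_n.+1 | (k < m)%N && (x k 0 != 0)] (fun k => complex.Re `|x k 0|) i0 Pi0) => i /andP[im xi] imax.
case/existsP: bot => j0 Pj0.
case: (@exists_max _ [pred k : 'I_n.+1 | (m < k)%N && (x k 0 != 0)] (fun k => complex.Re `|x k 0|) j0 Pj0) => j /andP[mj xj] jmax.
have nb : forall a k : 'I_n.+1, Fy R n a k != 0 -> (a == k.+1 :> nat) || (a.+1 == k :> nat).
  move=> a k; apply: contraR; rewrite negb_or => /andP[h1 h2]; by rewrite Fy0.
have gi := @gersh R n C x lam i ev xi.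
have gi' : `|(dd R n C i)%:C%C - lam| <= K R n.
  apply: gi => k /nb hk.
  have [km|km] := ltnP k m.
    have [->|xk] := eqVneq (x k 0) 0; first by rewrite normr0.
    by apply: le_norm_re; apply: imax; apply/andP; split.
  have ekm : k = m by apply: val_inj => /=; move: hk im km; lia.
  by rewrite ekm xm normr0.
have gj' : `|(dd R n C j)%:C%C - lam| <= K R n.
  apply: (@gersh R n C x lam j ev xj) => k /nb hk.
  have [km|km] := ltnP m k.
    have [->|xk] := eqVneq (x k 0) 0; first by rewrite normr0.
    by apply: le_norm_re; apply: jmax; apply/andP; split.
  have ekm : k = m by apply: val_inj => /=; move: hk mj km; lia.
  by rewrite ekm xm normr0.
have h : `|(dd R n C j - dd R n C i)%:C%C| <= K R n + K R n.
  rewrite rmorphB (_ : _ - _ = ((dd R n C j)%:C%C - lam) - ((dd R n C i)%:C%C - lam)); last by ring.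
  by apply: le_trans (ler_normB _ _) _; apply: lerD.
move: h; rewrite norm_real KE -rmorphD lecR.
have E : dd R n C j - dd R n C i = (dl R n j - dl R n i) * (C - dl R n i - dl R n j) by rewrite /dd; ring.
rewrite E /dl.
have hJ := JJ R n.
have ij : (i.+1 <= j)%N by move: im mj; lia.
have ijR : (i.+1)%:R <= j%:R :> R by rewrite ler_nat.
have jn : j%:R <= n%:R :> R by rewrite ler_nat -ltnS.
have i0' : 0 <= i%:R :> R by [].
have := Kr_ge0; rewrite /C0 in hC; rewrite -natr1 in ijR.
move=> Kp; rewrite ger0_norm; last by nra.
nra.
Qed.
End Main.


Theorem lemma4p3 (R : realType) (n : nat) (hn : (0 < n)%N) (T : R) (hT : 0 < T)
    (m : 'I_n.+1) :
  exists C0 : R, forall C : R, C0 <= C ->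
    forall v : R -> 'cV[R[i]]_n.+1,
      solves C v -> v 0 != 0 ->
      exists t : R, 0 <= t <= T /\ adj (v t) *m psi R m != 0.
Proof.
exists (C0 R n) => C hC v hv v0.
case: (pselect (exists t : R, 0 <= t <= T /\ adj (v t) *m psi R m != 0)) => // hno.
exfalso.
have hz : forall t, 0 <= t <= T -> v t m 0 = 0.
  move=> t ht.
  have e : adj (v t) *m psi R m = 0.
    apply/eqP; apply: contraT => ne; case: hno; by exists t.
  have := congr1 (fun M : 'M[R[i]]_1 => M 0 0) e.
  rewrite /= mxE (bigD1 m) //= big1 ?addr0.
    by rewrite !mxE eqxx mulr1 => /eqP; rewrite conjc_eq0 => /eqP.
  by move=> j /negbTE jm; rewrite !mxE jm mulr0.
have Pw : @Pinv _ _ (gen n C) m (v 0).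
  move=> k; apply: (@krylov_zero R n C v hv T m hT hz k 0).
  by rewrite lexx hT.
have [lam [x [x0 ev xm]]] := @eig_exists _ _ (gen n C) m (v 0) v0 Pw.
by move: x0; rewrite (@no_eig R n C hC m x lam ev xm) eqxx.
Qed.
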